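(* There exists a uniform morphism $\varphi$ on $\{0,1\}$ having two infinite fixed points (one beginning with $0$ and one beginning with $1$) such that one of them is weak abelian periodic and the other is not.
   Context: A morphism $\varphi$ on $\{0,1\}^*$ is uniform if $|\varphi(0)|=|\varphi(1)|$. An infinite fixed point of $\varphi$ is an infinite word $w$ with $\varphi(w)=w$. For nonempty finite $u$, $\rho_a(u)=|u|_a/|u|$, where $|u|_a$ counts occurrences of $a$. An infinite word $w$ is weak abelian periodic if $w=v_0v_1v_2\cdots$ with $v_0$ finite and $v_1,v_2,\dots$ nonempty finite words with $\rho_a(v_i)=\rho_a(v_j)$ for all letters $a$ and all $i,j\ge1$. *)

(* Defs.v *)
From mathcomp Require Import all_boot all_order all_algebra.
Set Implicit Arguments. Unset Strict Implicit. Unset Printing Implicit Defensive.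
Import GRing.Theory Num.Theory.

(* Alphabet {0,1} is bool: 0 = false, 1 = true.
   A morphism on {0,1}^* is determined by the images of the letters. *)
Definition morphism := bool -> seq bool.

Definition uniform (phi : morphism) : Prop := size (phi false) = size (phi true).

Definition infword := nat -> bool.

(* Image of an infinite word under a uniform morphism of length k > 0:
   phi(w) = phi(w 0) phi(w 1) ..., so position n lies in block n %/ k at offset n %% k.
   (If k = 0, phi(w) is the empty word, which is never an infinite fixed point.) *)
Definition infinite_fixed_point (phi : morphism) (w : infword) : Prop :=
  let k := size (phi false) in
  (0 < k)%N /\ forall n : nat, w n = nth false (phi (w (n %/ k))) (n %% k).

Definition factor (w : infword) (i j : nat) : seq bool :=
  [seq w k | k <- iota i (j - i)].

Definition rho (a : bool) (u : seq bool) : rat :=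
  ((count_mem a u)%:R / (size u)%:R)%R.

(* w = v_0 v_1 v_2 ... where v_0 = w[0, c 0), v_{i+1} = w[c i, c (i+1)),
   the v_{i+1} nonempty (c strictly increasing) and all v_i (i >= 1)
   having the same letter frequencies. *)
Definition weak_abelian_periodic (w : infword) : Prop :=
  exists c : nat -> nat,
    (forall i, (c i < c i.+1)%N) /\
    forall (a : bool) (i j : nat),
      rho a (factor w (c i) (c i.+1)) = rho a (factor w (c j) (c j.+1)).

(* Main.v *)
Require Import Defs.
From mathcomp Require Import all_boot all_order all_algebra.
From mathcomp Require Import zify.
Import GRing.Theory Num.Theory.

Fixpoint good (k n : nat) : bool :=
  match k with 0 => true | k'.+1 => (n %% 3 != 2) && good k' (n %/ 3) end.

Lemma good0 k : good k 0 = true.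
Proof. by elim: k => //= k ->. Qed.

Lemma good_fuel k1 k2 n : (n <= k1)%N -> (n <= k2)%N -> good k1 n = good k2 n.
Proof.
elim: k1 k2 n => [|k IH] k2 n h1 h2.
  have -> : n = 0%N by lia. by rewrite !good0.
case: k2 h2 => [|k2] h2.
  have -> : n = 0%N by lia. by rewrite !good0.
rewrite /=; congr (_ && _); apply: IH; lia.
Qed.

Definition w1 : infword := fun n => good n n.

Lemma w1_eq n : w1 n = (n %% 3 != 2) && w1 (n %/ 3).
Proof.
rewrite /w1; case: n => [|n] //=.
by rewrite (@good_fuel n (n.+1 %/ 3) (n.+1 %/ 3)) //; lia.
Qed.

Definition phi : morphism := fun b => if b then [:: true; true; false] else [:: false; false; false].

Lemma w1_fp : infinite_fixed_point phi w1.
Proof.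
split => // n; rewrite /= w1_eq.
have : (n %% 3 < 3)%N by rewrite ltn_mod.
case: (w1 (n %/ 3)); case: (n %% 3) => [|[|[|k]]] //=; rewrite ?andbF //.
Qed.

Definition O (N : nat) : nat := count_mem true (map w1 (iota 0 N)).

Lemma OS N : O N.+1 = O N + w1 N.
Proof.
rewrite /O -addn1 iotaD map_cat count_cat /= add0n addn0.
by case: (w1 N).
Qed.

Lemma O3 N : O (3 * N) = 2 * O N.
Proof.
elim: N => [|N IH]; first by [].
have -> : (3 * N.+1 = (3 * N).+1.+1.+1)%N by lia.
rewrite !OS IH.
have e0 : w1 (3 * N) = w1 N.
  rewrite w1_eq; have -> : (3 * N) %% 3 = 0%N by lia.
  by have -> : (3 * N) %/ 3 = N by lia.
have e1 : w1 (3 * N).+1 = w1 N.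
  rewrite w1_eq; have -> : (3 * N).+1 %% 3 = 1%N by lia.
  by have -> : (3 * N).+1 %/ 3 = N by lia.
have e2 : w1 (3 * N).+2 = false.
  rewrite w1_eq; by have -> : (3 * N).+2 %% 3 = 2%N by lia.
rewrite e0 e1 e2; lia.
Qed.

Lemma Omono a b : (a <= b)%N -> (O a <= O b)%N.
Proof.
move=> /subnK <-; elim: (b - a)%N => [|k IH] //.
by rewrite addSn OS; apply: leq_trans IH (leq_addr _ _).
Qed.

Lemma Opow m : O (3 ^ m) = (2 ^ m)%N.
Proof. elim: m => [|m IH]; first by rewrite /O.
by rewrite expnS O3 IH expnS. Qed.

Lemma w1pow m : w1 (3 ^ m) = true.
Proof. elim: m => [|m IH]; first by [].
rewrite w1_eq expnS; have -> : (3 * 3 ^ m) %% 3 = 0%N by lia.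
by have -> : (3 * 3 ^ m) %/ 3 = 3 ^ m by lia. Qed.

Lemma factor_count a b : (a <= b)%N ->
  count_mem true (factor w1 a b) = (O b - O a)%N.
Proof.
move=> ab.
have -> : O b = (O a + count_mem true (factor w1 a b))%N.
  by rewrite /O /factor -{1}(subnKC ab) iotaD map_cat count_cat add0n.
by rewrite addKn.
Qed.

Lemma p23 e : (2 ^ e <= 3 ^ e)%N.
Proof. by case: e => // e; rewrite leq_exp2r. Qed.

Lemma pow_bound M : (2 ^ M * (M + 2) <= 2 * 3 ^ M)%N.
Proof.
elim: M => [|M IH] //.
have h := p23 M.
rewrite !expnS; nia.
Qed.

Lemma baseL p q c0 X Y M : (0 < p)%N -> M = (4 * q + 2 * p * c0 + 1)%N ->
  (X * (M + 2) <= 2 * Y)%N -> (1 <= X)%N -> (q * (2 * X) + p * c0 < p * Y)%N.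
Proof.
move=> hp -> h hX.
have e : (X * (4 * q + 2 * p * c0 + 1 + 2) = 4 * q * X + X * (2 * p * c0 + 3))%N by nia.
have : (2 * p * c0 + 3 <= X * (2 * p * c0 + 3))%N by rewrite leq_pmull.
have : (Y <= p * Y)%N by rewrite leq_pmull.
lia.
Qed.
Lemma stepL q p c0 X Y Z : (q * (2 * X) + p * c0 < p * Y)%N -> (2 * X <= 3 * Z)%N -> (Z <= Y)%N ->
   (q * (2 * (2 * X)) + p * c0 < p * (3 * Y))%N.
Proof. nia. Qed.
Lemma finL p q N c0 A B X PY : ((A - B) * q = p * (N - c0))%N -> (q * X + p * c0 < PY)%N ->
  (PY <= p * N)%N -> (A <= X)%N -> False.
Proof.
move=> h1 h2 h3 h4.
have : (q * (A - B) <= q * X)%N by rewrite leq_mul2l; apply/orP; right; lia.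
have : (p * N - p * c0 <= p * (N - c0))%N by rewrite mulnBr.
nia.
Qed.

Lemma not_wap : ~ weak_abelian_periodic w1.
Proof.
case=> c [cinc hr].
have cmono i j : (i <= j)%N -> (c i <= c j)%N.
  move=> /subnK <-; elim: (j - i)%N => [|k IH] //.
  by rewrite addSn; apply: leq_trans IH (ltnW (cinc _)).
have cge i : (i <= c i)%N.
  elim: i => [|i IH] //; exact: leq_ltn_trans IH (cinc i).
set p := count_mem true (factor w1 (c 0) (c 1)).
set q := (c 1 - c 0)%N.
have qpos : (0 < q)%N by rewrite subn_gt0.
have blk i : (count_mem true (factor w1 (c i) (c i.+1)) * q
              = p * (c i.+1 - c i))%N.
  have := hr true i 0%N; rewrite /rho !size_map !size_iota.
  move/eqP; rewrite eqr_div ?pnatr_eq0 -?lt0n ?subn_gt0 ?cinc //.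
  by rewrite -!natrM eqr_nat => /eqP.
have acc i : ((O (c i) - O (c 0)) * q = p * (c i - c 0))%N.
  elim: i => [|i IH]; first by rewrite !subnn ?muln0 ?mul0n.
  have := blk i; rewrite factor_count ?(ltnW (cinc i)) // => hb.
  have h1 := Omono _ _ (cmono 0%N i (leq0n _)).
  have h2 := Omono _ _ (ltnW (cinc i)).
  have h3 := cmono 0%N i (leq0n _).
  have h4 := cinc i.
  have -> : (O (c i.+1) - O (c 0) = (O (c i.+1) - O (c i)) + (O (c i) - O (c 0)))%N by lia.
  have -> : (c i.+1 - c 0 = (c i.+1 - c i) + (c i - c 0))%N by lia.
  by rewrite mulnDl mulnDr hb IH.
case: (posnP p) => p0.
  (* no trues after c 0 *)
  pose m := c 0.
  have h3 : (c 0 <= 3 ^ m)%N.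
    by apply: leq_trans (ltnW (ltn_expl _ _)).
  have hc : (3 ^ m < c (3 ^ m).+1)%N by apply: leq_trans (cge _).
  have := acc (3 ^ m).+1; rewrite p0 mul0n => /eqP.
  rewrite muln_eq0 (negbTE (lt0n_neq0 qpos)) orbF subn_eq0 => hO.
  have := Omono _ _ hc; rewrite OS w1pow.
  have := Omono _ _ h3. lia.
pose M := (4 * q + 2 * p * c 0 + 1)%N.
have hM := pow_bound M.
have h2M : (1 <= 2 ^ M)%N by rewrite expn_gt0.
have base : (q * 2 ^ M.+1 + p * c 0 < p * 3 ^ M)%N.
  rewrite expnS; exact: (@baseL p q (c 0) (2 ^ M) (3 ^ M) M p0 erefl hM h2M).
have step m : (M <= m)%N -> (q * 2 ^ m.+1 + p * c 0 < p * 3 ^ m)%N.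
  move=> /subnK <-; elim: (m - M)%N => [|k IH] //.
  move: IH; rewrite addSn !expnS => IH.
  apply: (@stepL q p (c 0) (2 ^ (k + M)) (3 ^ (k + M)) (3 ^ (k + M)) IH _ (leqnn _)).
  by have := p23 (k + M).+1; rewrite !expnS.
set N := c (3 ^ M).
have hN : (3 ^ M <= N)%N by exact: cge.
have N0 : (0 < N)%N by apply: leq_trans hN; rewrite expn_gt0.
have /andP [lo hi] := trunc_log_bounds (isT : (1 < 3)%N) N0.
set m := trunc_log 3 N in lo hi.
have Mm : (M <= m)%N.
  by rewrite -ltnS -(ltn_exp2l _ _ (isT : (1 < 3)%N)); apply: leq_ltn_trans hN hi.
have hO : (O N <= 2 ^ m.+1)%N by rewrite -Opow; apply: Omono; apply: ltnW; rewrite expnS in hi *.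
have ha := acc (3 ^ M); rewrite -/N in ha.
have h3m : (p * 3 ^ m <= p * N)%N by rewrite leq_mul2l lo orbT.
exact: (finL _ _ _ _ _ _ _ _ ha (step m Mm) h3m hO).
Qed.

Definition w0 : infword := fun _ => false.

Lemma w0_fp : infinite_fixed_point phi w0.
Proof.
split => // n; rewrite /w0 /=.
have : (n %% 3 < 3)%N by rewrite ltn_mod.
by case: (n %% 3) => [|[|[|k]]].
Qed.

Lemma w0_wap : weak_abelian_periodic w0.
Proof.
exists id; split => // a i j.
by rewrite /factor /= !subSnn.
Qed.

Theorem proposition5 :
  exists phi : morphism,
    uniform phi /\
    exists w0 w1 : infword,
      w0 0%N = false /\ w1 0%N = true /\
      infinite_fixed_point phi w0 /\ infinite_fixed_point phi w1 /\
      ((weak_abelian_periodic w0 /\ ~ weak_abelian_periodic w1) \/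
       (weak_abelian_periodic w1 /\ ~ weak_abelian_periodic w0)).
Proof.
exists phi; split; first by [].
exists w0, w1; split; first by [].
split; first by [].
split; first exact: w0_fp.
split; first exact: w1_fp.
by left; split; [exact: w0_wap | exact: not_wap].
Qed.
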